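(* Let $\lambda=\mathrm{diag}(\lambda_x,\lambda_y)$ with $\lambda_x,\lambda_y\in[0,1)$. Fix an index $k$ and given values $h(k)$, $v(k)$, $\omega_k\neq0$, with $\rho_k=(\rho_{xk},\rho_{yk})^T$, $D\rho_k=(D\rho_{xk},D\rho_{yk})^T$, $\eta_k=(\eta_{xk},\eta_{yk})^T:=\Phi(\theta_{k+1})-\Phi(\theta_k)$ and $\Psi=(\Psi_x,\Psi_y)^T$. Suppose $\delta_k>0$ is a root of $$\tfrac12 g\delta^2-\Big\{[D\rho_{xk}+\Psi_x(\theta_k,\omega_k)]\cot\theta_k+[D\rho_{yk}+\Psi_y(\theta_k,\omega_k)]\Big\}\delta+\Big[\eta_{xk}\cot\theta_k+\eta_{yk}+(\lambda_x-1)\rho_{xk}\cot\theta_k+(\lambda_y-1)\rho_{yk}\Big]=0,$$ define $$I_k=-\frac{m\{(\lambda_x-1)\rho_{xk}+\eta_{xk}-[D\rho_{xk}+\Psi_x(\theta_k,\omega_k)]\delta_k\}}{\delta_k\sin\theta_k},$$ assume $I_k\neq0$, and define $r_k=\dfrac{(-1)^{k+1}J\Delta\theta^*}{I_k\delta_k}-\dfrac{J\omega_k}{I_k}$. Then applying $(I_k,r_k)$ and propagating with flight time $\delta_k$ via the hybrid devil-stick dynamics yields $\theta_{k+1}=\theta_k+(-1)^{k+1}\Delta\theta^*$ (so $\delta_k$ is consistent with $\delta_k=(-1)^{k+1}\Delta\theta^*/\omega_{k+1}$, $\omega_{k+1}=\omega_k+I_kr_k/J$) and $\rho_{k+1}=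\lambda\rho_k$.
   Context: Fix constants $m,J,g>0$, $\alpha,\beta>0$, and angles $\theta^{\mathrm{odd}}\in(0,\pi/2)$, $\theta^{\mathrm{even}}\in(\pi/2,\pi)$; set $\Delta\theta^*=\theta^{\mathrm{even}}-\theta^{\mathrm{odd}}>0$. For $k=1,2,\dots$ put $\theta_k=\theta^{\mathrm{odd}}$ if $k$ is odd and $\theta_k=\theta^{\mathrm{even}}$ if $k$ is even, so $\theta_{k+1}=\theta_k+(-1)^{k+1}\Delta\theta^*$ and $\theta_{k+2}=\theta_k$. The hybrid devil-stick dynamics consist of states $h(k)\in\mathbb{R}^2$, $v(k)\in\mathbb{R}^2$, $\omega_k\in\mathbb{R}\setminus\{0\}$, inputs $I_k,r_k\in\mathbb{R}$ and times of flight $\delta_k>0$ satisfying, for all $k\ge1$, $$h(k+1)=h(k)+v(k)\delta_k+\begin{bmatrix}-\sin\theta_k\\ \cos\theta_k\end{bmatrix}\frac{I_k\delta_k}{m}+\begin{bmatrix}0\\-\tfrac12 g\delta_k^2\end{bmatrix},\qquad v(k+1)=v(k)+\begin{bmatrix}-\sin\theta_k\\ \cos\theta_k\end{bmatrix}\frac{I_k}{m}+\begin{bmatrix}0\\-g\delta_k\end{bmatrix},$$ $$\omega_{k+1}=\omega_k+\frac{I_kr_k}{J},\qquad \theta_{k+1}=\theta_k+\omega_{k+1}\delta_k,$$ so that $\delta_k=(-1)^{k+1}\Delta\theta^*/\omega_{k+1}$. Define $\Phi(\theta)=(\alpha\tan\theta,\ \beta)^T$ and $$\Psi(\theta_k,\omega_k)=\begin{bmatrix}\dfrac{(-1)^k\omega_k\alpha}{\Delta\theta^*}(\tan\theta_k-\tan\theta_{k+1})\\[2mm]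 -\dfrac{(-1)^k g\Delta\theta^*}{2\omega_k}\end{bmatrix},$$ and $\rho_k=h(k)-\Phi(\theta_k)$, $D\rho_k=v(k)-\Psi(\theta_k,\omega_k)$. *)

(* Defs.v *)
From Stdlib Require Import Reals Lra.
Open Scope R_scope.

Definition theta_seq (th_odd th_even : R) (k : nat) : R :=
  if Nat.odd k then th_odd else th_even.

Definition dtheta (th_odd th_even : R) : R := th_even - th_odd.

Definition cot (x : R) : R := cos x / sin x.

Definition Phi_x (alpha th : R) : R := alpha * tan th.
Definition Phi_y (beta : R) (th : R) : R := beta.

(* Psi(theta_k, omega_k), written with the index k *)
Definition Psi_x (alpha th_odd th_even : R) (k : nat) (w : R) : R :=
  (-1) ^ k * w * alpha / dtheta th_odd th_even *
    (tan (theta_seq th_odd th_even k) - tan (theta_seq th_odd th_even (S k))).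
Definition Psi_y (g th_odd th_even : R) (k : nat) (w : R) : R :=
  - ((-1) ^ k * g * dtheta th_odd th_even / (2 * w)).

(* Main.v *)
Require Import Defs.
From Stdlib Require Import Reals Lra.
Open Scope R_scope.

Lemma odd_S_neg (k : nat) : Nat.odd (S k) = negb (Nat.odd k).
Proof. rewrite Nat.odd_succ, <- Nat.negb_odd. reflexivity. Qed.

Lemma pow_m1_S (k : nat) : (-1) ^ (S k) = if Nat.odd k then 1 else -1.
Proof.
  induction k as [|k IH]. simpl. ring.
  replace ((-1) ^ S (S k)) with (- (-1) ^ S k) by (simpl; ring).
  rewrite IH, odd_S_neg. destruct (Nat.odd k); simpl; ring.
Qed.

Theorem mainTheorem7
  (m J g alpha beta th_odd th_even : R)
  (hm : 0 < m) (hJ : 0 < J) (hg : 0 < g) (halpha : 0 < alpha) (hbeta : 0 < beta)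
  (hodd : 0 < th_odd < PI / 2) (heven : PI / 2 < th_even < PI)
  (lx ly : R) (hlx : 0 <= lx < 1) (hly : 0 <= ly < 1)
  (k : nat) (hk : (1 <= k)%nat)
  (hx hy vx vy w : R) (hw : w <> 0)
  (delta I r : R)
  (hxn hyn vxn vyn wn : R) :
  let th := theta_seq th_odd th_even k in
  let thn := theta_seq th_odd th_even (S k) in
  let rx := hx - Phi_x alpha th in
  let ry := hy - Phi_y beta th in
  let Drx := vx - Psi_x alpha th_odd th_even k w in
  let Dry := vy - Psi_y g th_odd th_even k w in
  let etax := Phi_x alpha thn - Phi_x alpha th in
  let etay := Phi_y beta thn - Phi_y beta th in
  0 < delta ->
  1 / 2 * g * delta ^ 2
    - ((Drx + Psi_x alpha th_odd th_even k w) * cot th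
       + (Dry + Psi_y g th_odd th_even k w)) * delta
    + (etax * cot th + etay + (lx - 1) * rx * cot th + (ly - 1) * ry) = 0 ->
  I = - (m * ((lx - 1) * rx + etax - (Drx + Psi_x alpha th_odd th_even k w) * delta))
        / (delta * sin th) ->
  I <> 0 ->
  r = (-1) ^ (S k) * J * dtheta th_odd th_even / (I * delta) - J * w / I ->
  (* hybrid dynamics from step k to k+1 *)
  hxn = hx + vx * delta + (- sin th) * I * delta / m ->
  hyn = hy + vy * delta + cos th * I * delta / m - 1 / 2 * g * delta ^ 2 ->
  vxn = vx + (- sin th) * I / m ->
  vyn = vy + cos th * I / m - g * delta ->
  wn = w + I * r / J ->
  th + wn * delta = th + (-1) ^ (S k) * dtheta th_odd th_even
  /\ th + wn * delta = thn
  /\ hxn - Phi_x alpha thn = lx * rx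
  /\ hyn - Phi_y beta thn = ly * ry.
Proof.
  intros th thn rx ry Drx Dry etax etay Hd Hq HI HI0 Hr Hhx Hhy _ _ Hwn.
  assert (Hs : sin th <> 0).
  { assert (0 < sin th); [|lra]. apply sin_gt_0; unfold th, theta_seq;
    destruct (Nat.odd k); pose proof PI_RGT_0; lra. }
  assert (Hd0 : delta <> 0) by lra.
  assert (E1 : th + wn * delta = th + (-1) ^ (S k) * dtheta th_odd th_even).
  { rewrite Hwn, Hr. field. split; lra. }
  split; [exact E1|]. split.
  { rewrite E1, pow_m1_S. unfold thn, th, theta_seq, dtheta. rewrite odd_S_neg.
    destruct (Nat.odd k); simpl; ring. }
  unfold Drx, Dry, etax, etay, rx, ry, Phi_x, Phi_y, cot in *.
  set (Px := Psi_x alpha th_odd th_even k w) in *.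
  set (Py := Psi_y g th_odd th_even k w) in *.
  set (s := sin th) in *. set (c := cos th) in *.
  set (t1 := tan th) in *. set (t2 := tan thn) in *.
  split.
  - rewrite Hhx, HI. field; repeat split; first [exact Hs | lra].
  - rewrite Hhy, HI.
    apply (Rmult_eq_reg_l s); [|exact Hs].
    replace (s * (ly * (hy - beta))) with
      (s * (ly * (hy - beta)) - s * (1 / 2 * g * delta ^ 2 -
        ((vx - Px + Px) * (c / s) + (vy - Py + Py)) * delta +
        ((alpha * t2 - alpha * t1) * (c / s) + (beta - beta) +
         (lx - 1) * (hx - alpha * t1) * (c / s) + (ly - 1) * (hy - beta)))) by (rewrite Hq; ring).
    clearbody s c t1 t2 Px Py. unfold Rdiv. field; repeat split; first [exact Hs | lra].
Qed.
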